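(* Let $M=(\mathit{AP}_f,S,T,V,\{\sim_o\}_{o\in\mathit{Obs}},s_\iota,o_\iota)$ be a model and $\Phi$ a CTL*KΔ formula. Let $M'$ and $\Phi'=\mathrm{tr}_{o_\iota}(\Phi)$ be as defined in the context. Then $M\models\Phi$ if and only if $M'\models\Phi'$.
   Context: Fix a countably infinite set $\mathit{AP}$ of atomic propositions and a finite nonempty set $\mathit{Obs}$ of observations. For a word $w$ we write $w_i$ for its letter at position $i$ (positions start at $0$), $w_{\le i}$ for its prefix ending at position $i$, $|w|$ for the length of a finite word, and $\mathit{last}(w)$ for the last letter of a finite word; $w\preceq w'$ means $w$ is a prefix of $w'$. Syntax of CTL*KΔ (single agent): history formulas $\varphi::=p\mid\neg\varphi\mid\varphi\wedge\varphi\mid\mathbf A\psi\mid\mathbf K\varphi\mid\Delta^{o}\varphi$ and path formulas $\psi::=\varphi\mid\neg\psi\mid\psi\wedge\psi\mid\mathbf X\psi\mid\psi\,\mathbf U\,\psi$, with $p\in\mathit{AP}$ and $o\in\mathit{Obs}$; the formulas of the logic are the history formulas. CTL*K is the fragment without $\Delta^o$. Abbreviations: $\top=p\vee\neg p$, $\vee,\to$ as usual, $\mathbf F\psi=\top\mathbf U\psi$, $\mathbf G\psi=\neg\mathbf F\neg\psi$. A model is $M=(\mathit{AP}_f,S,T,V,\{\sim_o\}_{o\in O},s_\iota,o_\iota)$ over some finite observation set $O$ (here $O=\mathit{Obs}$ unless stated otherwise), where $\mathit{AP}_f\subseteq\mathit{AP}$ is finite, $S$ is a finite set of states, $T\subseteq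 S\times S$ is left-total, $V:S\to 2^{\mathit{AP}_f}$, each $\sim_o$ is an equivalence relation on $S$, $s_\iota\in S$ and $o_\iota\in O$. A path is an infinite sequence $\pi=s_0s_1\dots$ of states with $s_i\,T\,s_{i+1}$ for all $i$ (starting at any state); a history is a finite nonempty prefix of a path. An observation record is a finite word over $O\times\mathbb N$; $\epsilon$ is the empty record, $r\cdot(o,n)$ is $r$ with $(o,n)$ appended, and $r_{=n}$ is the subword of $r$ consisting of the pairs whose second component is $n$. The list $\mathit{ol}(r,n)$ is defined by $\mathit{ol}(r,0)=o_\iota\cdot o_1\cdots o_k$ if $r_{=0}=(o_1,0)\cdots(o_k,0)$, and $\mathit{ol}(r,n+1)=\mathit{last}(\mathit{ol}(r,n))\cdot o_1\cdots o_k$ if $r_{=n+1}=(o_1,n+1)\cdots(o_k,n+1)$. Two histories are equivalent, $h\approx_r h'$, if $|h|=|h'|$ and for every $i<|h|$ and every $o$ occurring in $\mathit{ol}(r,i)$, $h_i\sim_o h'_i$. Natural semantics: for a history $h$ and record $r$: $h,r\models p$ iff $p\in V(\mathit{last}(h))$; $h,r\models\neg\varphi$ iff not $h,r\models\varphi$; $h,r\models\varphi_1\wedge\varphi_2$ iff both hold; $h,r\models\mathbf A\psi$ iff for all paths $\pi$ with $h\preceq\pi$, $\pi,|h|-1,r\models\psi$; $h,r\models\mathbf K\varphi$ iff $h',r\models\varphi$ for all histories $h'$ with $h'\approx_r h$; $h,r\models\Delta^o\varphi$ iff $h,r\cdot(o,|h|-1)\models\varphi$. For a path $\pi$, $n\in\mathbb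 N$ and record $r$: $\pi,n,r\models\varphi$ iff $\pi_{\le n},r\models\varphi$; negation and conjunction as usual; $\pi,n,r\models\mathbf X\psi$ iff $\pi,n+1,r\models\psi$; $\pi,n,r\models\psi_1\mathbf U\psi_2$ iff there is $m\ge n$ with $\pi,m,r\models\psi_2$ and $\pi,k,r\models\psi_1$ for all $n\le k<m$. $M\models\varphi$ iff $s_\iota,\epsilon\models\varphi$ ($s_\iota$ viewed as a one-state history). Construction of $M'$: for each $o\in\mathit{Obs}$ let $p_o\in\mathit{AP}\setminus\mathit{AP}_f$ be a fresh atomic proposition (pairwise distinct). $M'$ is the model over the one-element observation set $\{*\}$ with propositions $\mathit{AP}_f\cup\{p_o\mid o\in\mathit{Obs}\}$, states $S'=\{s_o\mid s\in S,\ o\in\mathit{Obs}\}$ (one copy $s_o$ of each state per observation), transitions $T'=\{(s_o,s'_o)\mid o\in\mathit{Obs},\ (s,s')\in T\}\cup\{(s_o,s_{o'})\mid s\in S,\ o,o'\in\mathit{Obs},\ o\ne o'\}$, valuation $V'(s_o)=V(s)\cup\{p_o\}$, single equivalence relation $\sim_*=\{(s_o,s'_o)\mid o\in\mathit{Obs},\ s\sim_o s'\}$, initial state $(s_\iota)_{o_\iota}$ and initial observation $*$. Translation $\mathrm{tr}_o$, for $o\in\mathit{Obs}$, defined by induction: $\mathrm{tr}_o(p)=p$; $\mathrm{tr}_o(\neg\varphi)=\neg\mathrm{tr}_o(\varphi)$; $\mathrm{tr}_o(\varphi_1\wedge\varphi_2)=\mathrm{tr}_o(\varphi_1)\wedge\mathrm{tr}_o(\varphi_2)$;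 $\mathrm{tr}_o(\mathbf K\varphi)=\mathbf K\,\mathrm{tr}_o(\varphi)$; $\mathrm{tr}_o(\mathbf A\psi)=\mathbf A(\mathbf G p_o\to\mathrm{tr}_o(\psi))$; $\mathrm{tr}_o(\Delta^{o'}\varphi)=\mathrm{tr}_{o'}(\varphi)$ if $o'=o$ and $\mathrm{tr}_o(\Delta^{o'}\varphi)=\mathbf A\mathbf X(p_{o'}\to\mathrm{tr}_{o'}(\varphi))$ if $o'\ne o$; on path formulas $\mathrm{tr}_o$ commutes with $\neg,\wedge,\mathbf X,\mathbf U$ and applies the history-formula clauses to history subformulas. $\Phi'=\mathrm{tr}_{o_\iota}(\Phi)$, a CTL*K formula. *)

(* Defs.v *)
From mathcomp Require Import all_boot.
Set Implicit Arguments. Unset Strict Implicit. Unset Printing Implicit Defensive.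

Inductive hform (O : Type) : Type :=
  | HAtom  : nat -> hform O
  | HNeg   : hform O -> hform O
  | HAnd   : hform O -> hform O -> hform O
  | HA     : pform O -> hform O
  | HK     : hform O -> hform O
  | HDelta : O -> hform O -> hform O
with pform (O : Type) : Type :=
  | PH   : hform O -> pform O
  | PNeg : pform O -> pform O
  | PAnd : pform O -> pform O -> pform O
  | PX   : pform O -> pform O
  | PU   : pform O -> pform O -> pform O.

Arguments HAtom {O}. Arguments HNeg {O}. Arguments HAnd {O}. Arguments HA {O}.
Arguments HK {O}. Arguments HDelta {O}.
Arguments PH {O}. Arguments PNeg {O}. Arguments PAnd {O}. Arguments PX {O}.
Arguments PU {O}.

Definition hor {O} (a b : hform O) : hform O := HNeg (HAnd (HNeg a) (HNeg b)).
Definition himp {O} (a b : hform O) : hform O := hor (HNeg a) b.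
Definition htop {O} : hform O := hor (HAtom 0) (HNeg (HAtom 0)).
Definition por {O} (a b : pform O) : pform O := PNeg (PAnd (PNeg a) (PNeg b)).
Definition pimp {O} (a b : pform O) : pform O := por (PNeg a) b.
Definition PF {O} (a : pform O) : pform O := PU (PH htop) a.
Definition PG {O} (a : pform O) : pform O := PNeg (PF (PNeg a)).

Fixpoint hatoms {O} (f : hform O) : seq nat :=
  match f with
  | HAtom p => [:: p]
  | HNeg g => hatoms g
  | HAnd g1 g2 => hatoms g1 ++ hatoms g2
  | HA g => patoms g
  | HK g => hatoms g
  | HDelta _ g => hatoms g
  end
with patoms {O} (f : pform O) : seq nat :=
  match f with
  | PH g => hatoms g
  | PNeg g => patoms g
  | PAnd g1 g2 => patoms g1 ++ patoms g2
  | PX g => patoms g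
  | PU g1 g2 => patoms g1 ++ patoms g2
  end.

Record model (O : finType) : Type := Model {
  APf : seq nat;
  St  : finType;
  Tr  : rel St;
  Val : St -> seq nat;
  Sim : O -> rel St;
  s0  : St;
  o0  : O
}.
Arguments APf {O}. Arguments St {O}. Arguments Tr {O}. Arguments Val {O}.
Arguments Sim {O}. Arguments s0 {O}. Arguments o0 {O}.

Definition wf_model {O : finType} (M : model O) : Prop :=
  (forall s, all (fun p => p \in APf M) (Val M s)) /\
  (forall s, exists s', Tr M s s') /\
  (forall o, reflexive (Sim M o) /\ symmetric (Sim M o) /\ transitive (Sim M o)).

Section Semantics.
Variables (O : finType) (M : model O).

Definition is_path (pi : nat -> St M) : Prop := forall i, Tr M (pi i) (pi i.+1).

Definition is_history (h : seq (St M)) : Prop :=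
  match h with [::] => False | x :: t => path (Tr M) x t end.

Definition hprefix (h : seq (St M)) (pi : nat -> St M) : Prop :=
  h = mkseq pi (size h).

Definition record := seq (O * nat).

Definition obs_at (r : record) (n : nat) : seq O :=
  [seq x.1 | x <- r & x.2 == n].

Fixpoint ol (r : record) (n : nat) : seq O :=
  match n with
  | 0 => o0 M :: obs_at r 0
  | n'.+1 => last (o0 M) (ol r n') :: obs_at r n'.+1
  end.

Definition hequiv (r : record) (h h' : seq (St M)) : Prop :=
  size h = size h' /\
  forall i, i < size h -> forall o, o \in ol r i ->
    Sim M o (nth (s0 M) h i) (nth (s0 M) h' i).

Fixpoint hsat (f : hform O) (h : seq (St M)) (r : record) {struct f} : Prop :=
  match f with
  | HAtom p => p \in Val M (last (s0 M) h)
  | HNeg g => ~ hsat g h r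
  | HAnd g1 g2 => hsat g1 h r /\ hsat g2 h r
  | HA g => forall pi, is_path pi -> hprefix h pi -> psat g pi (size h).-1 r
  | HK g => forall h', is_history h' -> hequiv r h' h -> hsat g h' r
  | HDelta o g => hsat g h (rcons r (o, (size h).-1))
  end
with psat (f : pform O) (pi : nat -> St M) (n : nat) (r : record) {struct f} : Prop :=
  match f with
  | PH g => hsat g (mkseq pi n.+1) r
  | PNeg g => ~ psat g pi n r
  | PAnd g1 g2 => psat g1 pi n r /\ psat g2 pi n r
  | PX g => psat g pi n.+1 r
  | PU g1 g2 => exists m, n <= m /\ psat g2 pi m r /\
                  (forall k, n <= k -> k < m -> psat g1 pi k r)
  end.

Definition msat (f : hform O) : Prop := hsat f [:: s0 M] [::].

End Semantics.

Section Construction.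
Variables (Obs : finType) (p : Obs -> nat).

Definition Mprime (M : model Obs) : model unit :=
  @Model unit
    (APf M ++ map p (enum Obs))
    (St M * Obs)%type
    (fun x y => ((x.2 == y.2) && Tr M x.1 y.1) || ((x.1 == y.1) && (x.2 != y.2)))
    (fun x => rcons (Val M x.1) (p x.2))
    (fun _ x y => (x.2 == y.2) && Sim M x.2 x.1 y.1)
    (s0 M, o0 M)
    tt.

Fixpoint tr (o : Obs) (f : hform Obs) {struct f} : hform unit :=
  match f with
  | HAtom q => HAtom q
  | HNeg g => HNeg (tr o g)
  | HAnd g1 g2 => HAnd (tr o g1) (tr o g2)
  | HK g => HK (tr o g)
  | HA g => HA (pimp (PG (PH (HAtom (p o)))) (trp o g))
  | HDelta o' g =>
      if o' == o then tr o' g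
      else HA (PX (PH (himp (HAtom (p o')) (tr o' g))))
  end
with trp (o : Obs) (f : pform Obs) {struct f} : pform unit :=
  match f with
  | PH g => PH (tr o g)
  | PNeg g => PNeg (trp o g)
  | PAnd g1 g2 => PAnd (trp o g1) (trp o g2)
  | PX g => PX (trp o g)
  | PU g1 g2 => PU (trp o g1) (trp o g2)
  end.

End Construction.

(* Main.v *)
Require Import Defs.
From mathcomp Require Import all_boot zify.
Set Implicit Arguments. Unset Strict Implicit. Unset Printing Implicit Defensive.

Section Proof1.
Variables (Obs : finType) (M : model Obs) (p : Obs -> nat).
Local Notation MP := (Mprime p M).
Local Notation S := (St M).

Definition stp (acc : seq Obs) (o : Obs) :=
  if o == last (o0 M) acc then acc else rcons acc o.
Definition fsq acc l := foldl stp acc l.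
Definition prev (r : record Obs) i :=
  match i with 0 => o0 M | n.+1 => last (o0 M) (ol M r n) end.
Definition cs r i := fsq [:: prev r i] (obs_at r i).
Definition cur r i := last (o0 M) (ol M r i).

Lemma ol_eq r i : ol M r i = prev r i :: obs_at r i.
Proof. by case: i. Qed.

Lemma fsq_last acc l : acc != [::] -> last (o0 M) (fsq acc l) = last (last (o0 M) acc) l.
Proof.
elim: l acc => [|o l IH] acc Hacc //=.
rewrite IH; last by rewrite /stp; case: ifP => // _; case: (acc) => //=; rewrite -cats1; case.
rewrite /stp; case: ifP => [/eqP -> //|_].
by rewrite last_rcons.
Qed.

Lemma fsq_nil acc l : acc != [::] -> fsq acc l != [::].
Proof.
elim: l acc => [|o l IH] acc Hacc //=.
apply: IH; rewrite /stp; case: ifP => // _; by case: (acc).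
Qed.

Lemma fsq_mem acc l x : acc != [::] -> (x \in fsq acc l) = (x \in acc) || (x \in l).
Proof.
elim: l acc => [|o l IH] acc Hacc /=; first by rewrite orbF.
rewrite IH; last by rewrite /stp; case: ifP => // _; by case: (acc).
rewrite in_cons /stp; case: ifP => [/eqP ->|_].
  case: (x == last (o0 M) acc) /eqP => [->|_]; last by rewrite orbA.
  by case: (acc) Hacc => // a l' _ /=; rewrite mem_last.
rewrite mem_rcons in_cons; by case: (x == o); rewrite ?orbT ?orbF.
Qed.

Lemma fsq_sorted acc l : sorted (fun a b => a != b) acc ->
  sorted (fun a b => a != b) (fsq acc l).
Proof.
elim: l acc => [|o l IH] acc Hacc //=.
apply: IH; rewrite /stp; case: ifP => // Ho.
case: acc Hacc Ho => [|a acc] //= H Ho.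
by rewrite rcons_path H /= eq_sym Ho.
Qed.

Lemma fsq_head acc l : acc != [::] -> head (o0 M) (fsq acc l) = head (o0 M) acc.
Proof.
elim: l acc => [|o l IH] acc Hacc //=.
rewrite IH; last by rewrite /stp; case: ifP => // _; by case: (acc).
rewrite /stp; case: ifP => // _; by case: (acc) Hacc.
Qed.

Lemma cs_nil r i : cs r i != [::].
Proof. exact: fsq_nil. Qed.

Lemma cs_mem r i o : (o \in cs r i) = (o \in ol M r i).
Proof. by rewrite /cs fsq_mem // ol_eq !in_cons in_nil orbF. Qed.

Lemma cs_last r i : last (o0 M) (cs r i) = cur r i.
Proof. by rewrite /cs fsq_last // /cur ol_eq. Qed.

Lemma cs_head r i : head (o0 M) (cs r i) = prev r i.
Proof. by rewrite /cs fsq_head. Qed.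

Lemma cs_sorted r i : sorted (fun a b => a != b) (cs r i).
Proof. exact: fsq_sorted. Qed.

Lemma prevS r i : prev r i.+1 = cur r i.
Proof. by []. Qed.

Definition blk r (x : S) i : seq (St MP) := map (fun c => (x, c)) (cs r i).
Fixpoint expn r (h : seq S) i : seq (St MP) :=
  match h with [::] => [::] | x :: t => blk r x i ++ expn r t i.+1 end.

Lemma expn_cat r h1 h2 i : expn r (h1 ++ h2) i = expn r h1 i ++ expn r h2 (i + size h1).
Proof.
elim: h1 i => [|x t IH] i /=; first by rewrite addn0.
by rewrite IH catA addSnnS.
Qed.

Lemma size_expn r h i : size h <= size (expn r h i).
Proof.
elim: h i => [|x t IH] i //=.
rewrite size_cat size_map.
have : 0 < size (cs r i) by rewrite lt0n size_eq0 cs_nil.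
move=> H0; rewrite -add1n; exact: leq_add H0 (IH i.+1).
Qed.

Lemma last_expn r h i z : h != [::] ->
  last z (expn r h i) = (last (s0 M) h, cur r (i + (size h).-1)).
Proof.
elim: h i z => [|x t IH] i z //= _.
case: t IH => [|y t] IH.
  rewrite cats0 addn0 -cs_last /blk; have := cs_nil r i.
  case: (cs r i) => //= c l _; by rewrite last_map.
by rewrite last_cat IH //= addSnnS.
Qed.

Lemma eq_expn r r' h i : (forall k, i <= k < i + size h -> cs r k = cs r' k) ->
  expn r h i = expn r' h i.
Proof.
elim: h i => [|x t IH] i //= H.
rewrite /blk H; last by rewrite leqnn /= addnS ltnS leq_addr.
congr (_ ++ _); apply: IH => k /andP [H1 H2]; apply: H.
by rewrite (ltnW H1) /= -addSnnS.
Qed.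


Lemma obs_at_rcons (r : record Obs) o n k :
  obs_at (rcons r (o, n)) k = if k == n then rcons (obs_at r k) o else obs_at r k.
Proof.
rewrite /obs_at filter_rcons /= eq_sym.
by case: ifP => // _; rewrite map_rcons.
Qed.

Lemma obs_at_big (r : record Obs) n k : all (fun e => e.2 < n.+1) r -> n < k ->
  obs_at r k = [::].
Proof.
move=> /allP H Hk; rewrite /obs_at.
suff -> : [seq x <- r | x.2 == k] = [::] by [].
apply/eqP; rewrite -(negbK (_ == _)) -has_filter; apply/hasPn => e /H He.
apply/negP => /eqP E; rewrite E in He; lia.
Qed.

Lemma cur_const (r : record Obs) n m : all (fun e => e.2 < n.+1) r -> n <= m ->
  cur r m = cur r n.
Proof.
move=> H; elim: m => [|m IH]; first by rewrite leqn0 => /eqP ->.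
rewrite leq_eqVlt => /orP [/eqP -> //|Hm].
by rewrite /cur /= (obs_at_big H Hm) /= -/(cur r m) -/(cur r n) IH.
Qed.

Lemma cs_big (r : record Obs) n k : all (fun e => e.2 < n.+1) r -> n < k ->
  cs r k = [:: cur r n].
Proof.
move=> H Hk; rewrite /cs (obs_at_big H Hk) /=.
case: k Hk => // k Hk; by rewrite /= -/(cur r k) (cur_const H).
Qed.

Lemma ol_rcons_lt (r : record Obs) o n k : k < n ->
  ol M (rcons r (o, n)) k = ol M r k.
Proof.
elim: k => [|k IH] Hk /=; rewrite obs_at_rcons.
  by case: ifP => // /eqP E; rewrite -E in Hk.
rewrite IH; last by apply: ltnW.
by case: ifP => // /eqP E; rewrite E ltnn in Hk.
Qed.

Lemma prev_rcons (r : record Obs) o n k : k <= n -> prev (rcons r (o, n)) k = prev r k.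
Proof. case: k => //= k Hk; by rewrite ol_rcons_lt. Qed.

Lemma cs_rcons_lt (r : record Obs) o n k : k < n -> cs (rcons r (o, n)) k = cs r k.
Proof.
move=> Hk; rewrite /cs prev_rcons ?(ltnW Hk) // obs_at_rcons.
by case: ifP => // /eqP E; rewrite E ltnn in Hk.
Qed.

Lemma cs_rcons_eq (r : record Obs) o n : cs (rcons r (o, n)) n = stp (cs r n) o.
Proof. by rewrite /cs prev_rcons // obs_at_rcons eqxx /fsq foldl_rcons. Qed.

Lemma cur_rcons (r : record Obs) o n : cur (rcons r (o, n)) n = o.
Proof. by rewrite -cs_last cs_rcons_eq /stp; case: ifP => [/eqP //|_]; rewrite last_rcons. Qed.

Lemma expn_delta (r : record Obs) o h : h != [::] ->
  expn (rcons r (o, (size h).-1)) h 0 =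
  if o == cur r (size h).-1 then expn r h 0 else rcons (expn r h 0) (last (s0 M) h, o).
Proof.
case/lastP: h => [//|h x] _.
rewrite size_rcons /= -(cats1 h) !expn_cat /= add0n !cats0 last_cat /=.
rewrite (@eq_expn _ r); last by move=> k /andP [_ Hk]; rewrite cs_rcons_lt.
rewrite /blk cs_rcons_eq /stp cs_last.
by case: ifP => // _; rewrite map_rcons rcons_cat.
Qed.


Definition RP (x y : St MP) := (x.2 == y.2) && Sim M x.2 x.1 y.1.

Lemma all2_nth (A B : Type) (x0 : A) (y0 : B) (R : A -> B -> bool) s t :
  all2 R s t <-> size s = size t /\ forall i, i < size s -> R (nth x0 s i) (nth y0 t i).
Proof.
elim: s t => [|a s IH] [|b t] /=; split => //; try by case.
- move=> /andP [Hab /IH [Hs Hi]]; split; first by rewrite Hs.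
  by case => // i Hi'; apply: Hi.
- case=> [[Hs] Hi]; rewrite (Hi 0 erefl) /=; apply/IH; split => // i Hi'.
  exact: (Hi i.+1).
Qed.

Lemma hequivP' H G : hequiv (M:=MP) [::] H G <-> all2 RP H G.
Proof.
rewrite (all2_nth (s0 MP) (s0 MP)); split.
  by case=> Hs Hi; split => // i Hi'; apply: (Hi i Hi' tt); case: i Hi' => //.
case=> Hs Hi; split => // i Hi' o _; case: o; exact: Hi.
Qed.

Fixpoint eqvM (r : record Obs) i (h2 h : seq S) : Prop :=
  match h2, h with
  | [::], [::] => True
  | x :: t, y :: u => (forall o, o \in cs r i -> Sim M o x y) /\ eqvM r i.+1 t u
  | _, _ => False
  end.

Lemma eqvM_gen r h2 h i :
  (size h2 = size h /\ forall k, k < size h2 -> forall o, o \in cs r (i + k) ->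
     Sim M o (nth (s0 M) h2 k) (nth (s0 M) h k)) <-> eqvM r i h2 h.
Proof.
elim: h2 h i => [|x t IH] [|y u] i /=; split => //; try by case.
- case=> [[Hs] Hk]; split; first by move=> o; rewrite -(addn0 i); exact: (Hk 0).
  apply/IH; split => // k Hk' o; rewrite addSnnS; exact: (Hk k.+1).
- case=> H0 /IH [Hs Hk]; split; first by rewrite Hs.
  case=> [_ o|k Hk' o]; first by rewrite addn0; exact: H0.
  by rewrite -addSnnS; exact: Hk.
Qed.

Lemma hequivP r h2 h : hequiv r h2 h <-> eqvM r 0 h2 h.
Proof.
rewrite -eqvM_gen; split; case=> Hs Hk; split => // k Hk' o.
  rewrite add0n cs_mem; exact: Hk.
rewrite -cs_mem; exact: Hk.
Qed.

Lemma cs_cons r i : cs r i = prev r i :: behead (cs r i).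
Proof.
have := cs_nil r i; have := cs_head r i; case: (cs r i) => //= a l -> //.
Qed.

Lemma TrP_same (x y : S) c : Tr MP (x, c) (y, c) = Tr M x y.
Proof. by rewrite /= eqxx /= andbF orbF. Qed.

Lemma path_cons_same (x y : S) c (s : seq (St MP)) :
  path (Tr MP) (x, c) ((y, c) :: s) = Tr M x y && path (Tr MP) (y, c) s.
Proof. by rewrite /= eqxx /= andbF orbF. Qed.

Lemma path_blk (x : S) c l : path (fun a b => a != b) c l ->
  path (Tr MP) (x, c) (map (fun c => (x, c)) l).
Proof.
move=> H; rewrite (path_map (f := fun c => (x, c))).
apply: sub_path H => a b /= ->; by rewrite eqxx andbT orbT.
Qed.

Lemma path_expn r t x i : path (Tr MP) (x, cur r i) (expn r t i.+1) = path (Tr M) x t.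
Proof.
elim: t x i => [|y u IH] x i //=.
rewrite /blk cs_cons prevS map_cons cat_cons path_cons_same cat_path.
have Hs : path (fun a b => a != b) (cur r i) (behead (cs r i.+1)).
  by have := cs_sorted r i.+1; rewrite cs_cons.
have Hl : last (cur r i) (behead (cs r i.+1)) = cur r i.+1.
  by rewrite -(cs_last r i.+1) [in RHS]cs_cons.
by rewrite path_blk // last_map Hl IH.
Qed.

Lemma sorted_expn r h i : sorted (Tr MP) (expn r h i) = sorted (Tr M) h.
Proof.
case: h => [|x t] //=.
rewrite /blk cs_cons map_cons cat_cons /= cat_path.
have Hs : path (fun a b => a != b) (prev r i) (behead (cs r i)).
  by have := cs_sorted r i; rewrite cs_cons.
have Hl : last (prev r i) (behead (cs r i)) = cur r i.
  by rewrite -(cs_last r i) [in RHS]cs_cons.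
by rewrite path_blk // last_map Hl path_expn.
Qed.

Lemma all2_cat (A B : Type) (R : A -> B -> bool) s1 s2 t1 t2 : size s1 = size t1 ->
  all2 R (s1 ++ s2) (t1 ++ t2) = all2 R s1 t1 && all2 R s2 t2.
Proof.
elim: s1 t1 => [|a s IH] [|b t] //= [Hs]; by rewrite IH // andbA.
Qed.

Lemma all2_blk (x y : S) l :
  all2 RP (map (fun c => (x, c)) l) (map (fun c => (y, c)) l) = all (fun c => Sim M c x y) l.
Proof. elim: l => //= c l ->; by rewrite /RP /= eqxx. Qed.

Lemma K1 r h2 h i : eqvM r i h2 h -> all2 RP (expn r h2 i) (expn r h i).
Proof.
elim: h2 h i => [|x t IH] [|y u] i //= [H0 H1].
rewrite all2_cat; last by rewrite /blk !size_map.
rewrite /blk all2_blk IH // andbT; apply/allP => o; exact: H0.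
Qed.

Lemma all2_snd H l (y : S) : all2 RP H (map (fun c => (y, c)) l) -> map snd H = l.
Proof.
elim: H l => [|a H IH] [|c l] //= /andP [/andP [/eqP -> _] /IH ->] //.
Qed.

Lemma blk_same (H : seq (St MP)) l z : sorted (fun a b => a != b) l -> map snd H = l ->
  sorted (Tr MP) H -> H = map (fun c => ((head z H).1, c)) l.
Proof.
elim: H l => [|a H IH] l; first by move=> _ <-.
case: H IH => [|b H] IH; first by move=> _ <- /=; case: a.
move=> Hl Hm /= /andP [Hab Hp].
rewrite -Hm /= in Hl; case/andP: Hl => Hne Hl.
have E : a.1 = b.1.
  move: Hab; rewrite /= (negbTE Hne) /= => /andP [/eqP -> _] //.
have := IH (map snd (b :: H)) Hl erefl Hp; rewrite /= => E2.
rewrite -Hm /=; congr (_ :: _); first by case: (a).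
rewrite E; exact: E2.
Qed.

Lemma K2 r h H i : sorted (Tr MP) H -> all2 RP H (expn r h i) ->
  exists h2, H = expn r h2 i /\ eqvM r i h2 h.
Proof.
elim: h H i => [|y u IH] H i /=.
  by case: H => // _ _; exists [::].
move=> Hs Ha.
set n := size (blk r y i).
have Hsz : size H = size (blk r y i ++ expn r u i.+1).
  by have := Ha; rewrite all2E => /andP [/eqP -> _].
have HH : H = take n H ++ drop n H by rewrite cat_take_drop.
rewrite HH all2_cat in Ha; last first.
  by rewrite size_take Hsz size_cat /n; case: ltnP => // Hle; apply/anti_leq; rewrite Hle leq_addr.
case/andP: Ha => Ha1 Ha2.
rewrite HH in Hs; case: (cat_sorted2 Hs) => Hs1 Hs2.
have [h2' [E2 Heq]] := IH _ _ Hs2 Ha2.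
have Hm := all2_snd Ha1.
have E1 := blk_same (s0 MP) (cs_sorted r i) Hm Hs1.
exists ((head (s0 MP) (take n H)).1 :: h2'); split.
  by rewrite {1}HH E2 /=; congr (_ ++ _).
split => //; move: Ha1; rewrite {1}E1 all2_blk => /allP; exact.
Qed.


Lemma mkseqD (T : Type) (f : nat -> T) a b :
  mkseq f (a + b) = mkseq f a ++ mkseq (fun k => f (a + k)) b.
Proof. rewrite /mkseq iotaD map_cat add0n; congr (_ ++ _); by rewrite -{1}(addn0 a) iotaDl -map_comp. Qed.

Lemma expn_tail r T i c : (forall k, i <= k -> cs r k = [:: c]) ->
  expn r T i = map (fun x => (x, c)) T.
Proof.
elim: T i => [|x T IH] i //= H.
by rewrite /blk H // IH // => k Hk; apply: H; apply: ltnW.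
Qed.

Lemma REL r h π (Π : nat -> St MP) :
  h != [::] -> all (fun e => e.2 < size h) r ->
  hprefix h π -> hprefix (expn r h 0) Π ->
  (forall k, (size h).-1 <= k ->
     Π (k + (size (expn r h 0) - size h)) = (π k, cur r (size h).-1)) ->
  forall m, (size h).-1 <= m ->
    mkseq Π (m + (size (expn r h 0) - size h)).+1 = expn r (mkseq π m.+1) 0.
Proof.
move=> hn Hr Hh HH Hk m Hm.
set n := size h; set H := expn r h 0; set d := size H - n; set c := cur r n.-1.
have Hn : 0 < n by rewrite lt0n size_eq0.
have HnH : n <= size H by apply: size_expn.
have E1 : m.+1 = n + (m.+1 - n) by rewrite subnKC //; lia.
have E2 : (m + d).+1 = size H + (m.+1 - n) by rewrite /d; lia.
rewrite E1 E2 !mkseqD -Hh -HH expn_cat add0n; congr (_ ++ _).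
rewrite (@expn_tail _ _ _ c); last first.
  move=> k Hk'; apply: cs_big; first by rewrite prednK.
  rewrite prednK //.
rewrite /mkseq -map_comp; apply: eq_map => k /=.
have -> : size H + k = (n + k) + d by rewrite /d; lia.
rewrite Hk //; lia.
Qed.

End Proof1.

Lemma histE (O : finType) (N : model O) (h : seq (St N)) :
  is_history h <-> h != [::] /\ sorted (Tr N) h.
Proof. case: h => [|x t] /=; split => //; by case. Qed.

Lemma hist_mkseq (O : finType) (N : model O) (π : nat -> St N) m :
  is_path π -> is_history (mkseq π m.+1).
Proof.
move=> Hp; apply/histE; split; first by rewrite -size_eq0 size_mkseq.
apply/(sortedP (π 0)) => i; rewrite size_mkseq => Hi.
rewrite !nth_mkseq //; last by apply: ltnW.
Qed.

Lemma ext_path (O : finType) (N : model O) (f : St N -> St N) :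
  (forall s, Tr N s (f s)) ->
  forall h, is_history h -> exists π : nat -> St N, is_path π /\ hprefix h π.
Proof.
move=> Hf h /histE [hn hs].
set π := fun k => if k < size h then nth (last (s0 N) h) h k
                  else iter (k - size h).+1 f (last (s0 N) h).
have Hn : 0 < size h by rewrite lt0n size_eq0.
exists π; split.
  move=> k; rewrite /π /=.
  case: (ltnP k.+1 (size h)) => Hk1.
    rewrite (ltnW Hk1); exact: (sortedP _ hs).
  case: (ltnP k (size h)) => Hk.
    have Ek : k = (size h).-1 by lia.
    have Hl : forall y z, last y h = last z h by case: (h) hn.
    rewrite Ek nth_last prednK // subnn /= (Hl _ (s0 N)); exact: Hf.
  have -> : k.+1 - size h = (k - size h).+1 by lia.
  exact: Hf.
rewrite /hprefix; apply: (@eq_from_nth _ (s0 N)); first by rewrite size_mkseq.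
move=> i Hi; rewrite nth_mkseq // /π Hi; exact: set_nth_default.
Qed.

Lemma pref_nth (O : finType) (N : model O) (h : seq (St N)) π x k :
  hprefix h π -> k < size h -> nth x h k = π k.
Proof. move=> Hp Hk; have := congr1 (fun s => nth x s k) Hp; rewrite nth_mkseq //. Qed.

Lemma pref_last (O : finType) (N : model O) (h : seq (St N)) π :
  hprefix h π -> h != [::] -> last (s0 N) h = π (size h).-1.
Proof.
move=> Hp hn; rewrite -nth_last (pref_nth _ Hp) // prednK // lt0n size_eq0 //.
Qed.

Lemma last_mkseqS (T : Type) (f : nat -> T) z m : last z (mkseq f m.+1) = f m.
Proof. by rewrite mkseqS last_rcons. Qed.

Require Import Stdlib.Logic.Classical.

Scheme hform_ind2 := Induction for hform Sort Prop
  with pform_ind2 := Induction for pform Sort Prop.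
Combined Scheme form_ind from hform_ind2, pform_ind2.

Section Main.
Variables (Obs : finType) (M : model Obs) (p : Obs -> nat).
Hypotheses (Hwf : wf_model M) (Hinj : injective p) (HAP : forall o, p o \notin APf M).
Local Notation MP := (Mprime p M).
Local Notation S := (St M).

Lemma valP (y : St MP) c : (p c \in Val MP y) = (y.2 == c).
Proof.
rewrite /= mem_rcons in_cons (inj_eq Hinj) eq_sym.
case: (y.2 == c) => //=; apply/negP => Hin.
case: Hwf => [Hv _]; move/allP: (Hv y.1) => /(_ _ Hin) Hc.
by move: (HAP c); rewrite Hc.
Qed.

Lemma atomE (Π : nat -> St MP) m q :
  psat (PH (HAtom q)) Π m [::] <-> q \in Val MP (Π m).
Proof.
change (q \in Val MP (last (s0 MP) (mkseq Π m.+1)) <-> q \in Val MP (Π m)).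
by rewrite last_mkseqS.
Qed.

Lemma GP (Π : nat -> St MP) n c :
  psat (PG (PH (HAtom (p c)))) Π n [::] <-> forall m, n <= m -> (Π m).2 = c.
Proof.
split.
  move=> H m Hm; apply: NNPP => Hc; apply: H; exists m; split => //; split.
    by move/atomE; rewrite valP => /eqP.
  by move=> k _ _ [a b].
move=> H [m [Hm [Hna _]]]; apply: Hna; apply/atomE; rewrite valP; apply/eqP; exact: H.
Qed.

Lemma pimpP (O : finType) (N : model O) a b (π : nat -> St N) n r :
  psat (pimp a b) π n r <-> (psat a π n r -> psat b π n r).
Proof. rewrite /=; split; [move=> H Ha; apply: NNPP => Hb; apply: H; tauto | tauto]. Qed.

Lemma himpP (O : finType) (N : model O) a b h r :
  hsat (M:=N) (himp a b) h r <-> (hsat a h r -> hsat b h r).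
Proof. rewrite /=; split; [move=> H Ha; apply: NNPP => Hb; apply: H; tauto | tauto]. Qed.

Definition fM (s : S) := odflt s [pick s' | Tr M s s'].
Lemma fM_tr s : Tr M s (fM s).
Proof.
rewrite /fM; case: pickP => [s' //|H] /=.
case: Hwf => [_ [Ht _]]; case: (Ht s) => s' Hs; by rewrite H in Hs.
Qed.

Lemma DeltaStep (H : seq (St MP)) x c o' F : is_history H -> last (s0 MP) H = (x, c) ->
  o' != c ->
  (hsat F (rcons H (x, o')) [::] <->
   forall Π, is_path Π -> hprefix H Π ->
     psat (PX (PH (himp (HAtom (p o')) F))) Π (size H).-1 [::]).
Proof.
move=> /histE [Hn Hs] HL Hne.
have Hsz : 0 < size H by rewrite lt0n size_eq0.
split.
  move=> HF Π HΠ Hpre.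
  change (hsat (himp (HAtom (p o')) F) (mkseq Π (size H).-1.+2) [::]).
  rewrite prednK // mkseqS -Hpre.
  apply/himpP => Ha.
  change (is_true (p o' \in Val MP (last (s0 MP) (rcons H (Π (size H)))))) in Ha.
  move: Ha; rewrite last_rcons valP => /eqP E.
  have Hl := pref_last Hpre Hn; rewrite HL in Hl.
  have := HΠ (size H).-1; rewrite -Hl prednK // => Htr.
  have E1 : (Π (size H)).1 = x.
    move: Htr; rewrite /= E (eq_sym c) (negbTE Hne) /= => /andP [/eqP Ex _].
    by rewrite Ex.
  by have -> : Π (size H) = (x, o') by rewrite -E -E1; case: (Π (size H)).
move=> HR.
have Hh : is_history (rcons H (x, o')).
  apply/histE; split; first by case: (H).
  case: (H) Hs HL => // a t /=; rewrite rcons_path => -> /= ->.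
  by apply/orP; right; rewrite /= eqxx /= eq_sym.
have Hf : forall y : St MP, Tr MP y (fM y.1, y.2) by move=> y; rewrite /= eqxx fM_tr.
have [Π [HΠ Hpre]] := ext_path Hf Hh.
  have [E1 E2] : H = mkseq Π (size H) /\ (x, o') = Π (size H).
    by move: Hpre; rewrite /hprefix size_rcons mkseqS => /rcons_inj [E1 E2].
  have := HR Π HΠ E1.
  change (hsat (himp (HAtom (p o')) F) (mkseq Π (size H).-1.+2) [::] -> hsat F (rcons H (x, o')) [::]).
  rewrite prednK // mkseqS -E1 -E2 => /himpP; apply.
  change (is_true (p o' \in Val MP (last (s0 MP) (rcons H (x, o'))))).
  by rewrite last_rcons valP.
Qed.


Definition Ph (f : hform Obs) := (forall o, p o \notin hatoms f) ->
  forall (h : seq S) (r : record Obs), is_history h -> all (fun e => e.2 < size h) r ->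
  (hsat f h r <-> hsat (M:=MP) (tr p (cur M r (size h).-1) f) (expn p r h 0) [::]).

Definition Pp (f : pform Obs) := (forall o, p o \notin patoms f) ->
  forall (π : nat -> S) (Π : nat -> St MP) (r : record Obs) c m0 d,
  is_path π -> is_path Π -> all (fun e => e.2 < m0.+1) r ->
  (forall m, m0 <= m -> cur M r m = c) ->
  (forall m, m0 <= m -> mkseq Π (m + d).+1 = expn p r (mkseq π m.+1) 0) ->
  forall m, m0 <= m -> (psat f π m r <-> psat (M:=MP) (trp p c f) Π (m + d) [::]).

Lemma HA_case ψ : Pp ψ -> Ph (HA ψ).
Proof.
move=> IH NA h r Hh Hr.
have NA' : forall o, p o \notin patoms ψ := NA.
case/histE: (Hh) => hn hs.
have HlH : last (s0 MP) (expn p r h 0) = (last (s0 M) h, cur M r (size h).-1).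
  by rewrite last_expn // add0n.
have HnH : size h <= size (expn p r h 0) by apply: size_expn.
have Hsorted : sorted (Tr MP) (expn p r h 0) by rewrite sorted_expn.
set n := size h in Hr HlH HnH *; set c := cur M r n.-1 in HlH *.
set H := expn p r h 0 in HlH HnH Hsorted *; set d := size H - n.
have Hn : 0 < n by rewrite lt0n size_eq0.
have HHn : H != [::] by rewrite -size_eq0 -lt0n (leq_trans Hn).
have EH : (size H).-1 = n.-1 + d by rewrite /d; lia.
have Hr0 : all (fun e => e.2 < n.-1.+1) r by rewrite prednK.
have En : n = n.-1.+1 by rewrite prednK.
have EH2 : size H = n + d by rewrite /d subnKC.
have Hc : forall m, n.-1 <= m -> cur M r m = c.
  by move=> m Hm; rewrite /c (cur_const M Hr0 Hm).
change ((forall π, is_path π -> hprefix h π -> psat ψ π n.-1 r) <->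
  (forall Π : nat -> St MP, is_path Π -> hprefix H Π ->
     psat (pimp (PG (PH (HAtom (p c)))) (trp p c ψ)) Π (size H).-1 [::])).
split.
- move=> HL Π HΠ Hpre; apply/pimpP => /GP HG.
  set π := fun k => if k < n then nth (s0 M) h k else (Π (k + d)).1.
  have key : forall k, n.-1 <= k -> Π (k + d) = (π k, c).
    move=> k Hk; rewrite /π /=; case: ltnP => Hkn.
      have Ek : k = n.-1 by lia.
      by rewrite Ek -EH -(pref_last Hpre HHn) HlH nth_last.
    have := HG (k + d); rewrite EH => E.
    rewrite -E; last by rewrite leq_add2r.
    by case: (Π (k + d)).
  have Hπ : is_path π.
    move=> k; case: (ltnP k.+1 n) => Hk.
      have E1 : π k = nth (s0 M) h k by rewrite /π /= (ltnW Hk).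
      have E2 : π k.+1 = nth (s0 M) h k.+1 by rewrite /π /= Hk.
      rewrite E1 E2; exact: (sortedP _ hs).
    have Hk' : n.-1 <= k by lia.
    have := HΠ (k + d); rewrite -addSn (key k Hk') (key k.+1 (leqW Hk')).
    by rewrite TrP_same.
  have Hpre' : hprefix h π.
    rewrite /hprefix; apply: (@eq_from_nth _ (s0 M)); first by rewrite size_mkseq.
    by move=> i Hi; rewrite nth_mkseq // /π /= Hi.
  have Hrel := REL hn Hr Hpre' Hpre key.
  have := IH NA' π Π r c n.-1 d Hπ HΠ Hr0 Hc Hrel n.-1 (leqnn _).
  rewrite -EH => <-; exact: HL.
- move=> HR π Hπ Hpre.
  set Π := fun k => if k < size H then nth (s0 MP) H k else (π (k - d), c).
  have key : forall k, n.-1 <= k -> Π (k + d) = (π k, c).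
    move=> k Hk; rewrite /Π /=; case: ltnP => Hk'.
      have Ek : k = n.-1 by rewrite EH2 ltn_add2r in Hk'; apply/eqP; rewrite eqn_leq Hk andbT -ltnS -En.
      by rewrite Ek -EH nth_last HlH -(pref_last Hpre hn).
    by rewrite addnK.
  have HΠ : is_path Π.
    move=> k; case: (ltnP k.+1 (size H)) => Hk.
      have E1 : Π k = nth (s0 MP) H k by rewrite /Π /= (ltnW Hk).
      have E2 : Π k.+1 = nth (s0 MP) H k.+1 by rewrite /Π /= Hk.
      rewrite E1 E2; exact: (sortedP _ Hsorted).
    have Ek : k = (k - d) + d by lia.
    have Hk' : n.-1 <= k - d by lia.
    rewrite Ek -addSn (key _ Hk') (key _ (leqW Hk')) TrP_same; exact: Hπ.
  have HpreΠ : hprefix H Π.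
    rewrite /hprefix; apply: (@eq_from_nth _ (s0 MP)); first by rewrite size_mkseq.
    by move=> i Hi; rewrite nth_mkseq // /Π /= Hi.
  have HG : forall m, (size H).-1 <= m -> (Π m).2 = c.
    move=> m Hm; have Em : m = (m - d) + d by lia.
    rewrite Em key //; lia.
  have Hrel := REL hn Hr Hpre HpreΠ key.
  have HGP : psat (PG (PH (HAtom (p c)))) Π (size H).-1 [::] by apply/GP.
  have := HR Π HΠ HpreΠ; move/pimpP => /(_ HGP).
  have := IH NA' π Π r c n.-1 d Hπ HΠ Hr0 Hc Hrel n.-1 (leqnn _).
  by rewrite -EH => ->.
Qed.

Lemma main_both : (forall f, Ph f) /\ (forall f, Pp f).
Proof.
apply: (@form_ind _ Ph Pp); rewrite /Ph /Pp.
-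
  move=> q NA h r /histE [hn hs] Hr /=.
  rewrite last_expn // add0n /= mem_rcons in_cons.
  have := NA (cur M r (size h).-1); rewrite in_cons in_nil orbF eq_sym => /negbTE ->.
  by [].
-
  move=> g IH NA h r Hh Hr /=; have := IH NA h r Hh Hr; tauto.
-
  move=> g1 IH1 g2 IH2 NA h r Hh Hr /=.
  have NA1 : forall o, p o \notin hatoms g1.
    by move=> o; move: (NA o); rewrite /= mem_cat negb_or => /andP [].
  have NA2 : forall o, p o \notin hatoms g2.
    by move=> o; move: (NA o); rewrite /= mem_cat negb_or => /andP [].
  have := IH1 NA1 h r Hh Hr; have := IH2 NA2 h r Hh Hr; tauto.
-
  exact: HA_case.
-
  move=> g IH NA h r Hh Hr /=; split.
  + move=> HL H' HH' Heq'.
    have [h2 [E Heqv]] := K2 ((@histE _ MP H').1 HH').2 ((hequivP' _ _).1 Heq').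
    have [Hsz _] := (eqvM_gen _ _ _ _).2 Heqv.
    have Hh2 : is_history h2.
      apply/histE; split.
        by case: (h2) E HH' => // -> /histE [].
      by rewrite -(sorted_expn p r h2 0) -E; case/histE: HH'.
    rewrite E -Hsz; apply/(IH NA h2 r Hh2); first by rewrite Hsz.
    by apply: HL => //; apply/hequivP.
  + move=> HR h2 Hh2 Heq.
    have Heqv := (hequivP _ _ _).1 Heq.
    have [Hsz _] := (eqvM_gen _ _ _ _).2 Heqv.
    apply/(IH NA h2 r Hh2); first by rewrite Hsz.
    rewrite Hsz; apply: HR; last by apply/hequivP'; apply: K1.
    case/histE: Hh2 => hn hs; apply/histE; split.
      by rewrite -size_eq0 -lt0n (leq_trans _ (size_expn p r h2 0)) // lt0n size_eq0.
    by rewrite sorted_expn.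
-
  move=> o' g IH NA h r Hh Hr /=.
  have hn : h != [::] by case/histE: Hh.
  have Hn : 0 < size h by rewrite lt0n size_eq0.
  have Hr' : all (fun e => e.2 < size h) (rcons r (o', (size h).-1)).
    by rewrite all_rcons Hr andbT /= prednK.
  have := IH NA h _ Hh Hr'; rewrite cur_rcons expn_delta //.
  case: ifP => [_ //|/negbT Hne E].
  rewrite E; apply: DeltaStep.
  + case/histE: Hh => _ hs; apply/histE; split; last by rewrite sorted_expn.
    by rewrite -size_eq0 -lt0n (leq_trans _ (size_expn p r h 0)).
  + by rewrite last_expn.
  + exact: Hne.
-
  move=> g IH NA π Π r c m0 d Hπ HΠ Hr Hc Hrel m Hm /=.
  rewrite Hrel // -(Hc m Hm).
  have := IH NA (mkseq π m.+1) r (hist_mkseq _ Hπ); rewrite size_mkseq /=; apply.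
  by apply: sub_all Hr => e /= He; apply: leq_trans He _.
-
  move=> g IH NA π Π r c m0 d Hπ HΠ Hr Hc Hrel m Hm /=.
  have := IH NA π Π r c m0 d Hπ HΠ Hr Hc Hrel m Hm; tauto.
-
  move=> g1 IH1 g2 IH2 NA π Π r c m0 d Hπ HΠ Hr Hc Hrel m Hm /=.
  have NA1 : forall o, p o \notin patoms g1.
    by move=> o; move: (NA o); rewrite /= mem_cat negb_or => /andP [].
  have NA2 : forall o, p o \notin patoms g2.
    by move=> o; move: (NA o); rewrite /= mem_cat negb_or => /andP [].
  have := IH1 NA1 π Π r c m0 d Hπ HΠ Hr Hc Hrel m Hm.
  have := IH2 NA2 π Π r c m0 d Hπ HΠ Hr Hc Hrel m Hm; tauto.
-
  move=> g IH NA π Π r c m0 d Hπ HΠ Hr Hc Hrel m Hm /=.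
  rewrite -addSn; apply: (IH NA π Π r c m0 d Hπ HΠ Hr Hc Hrel); exact: leqW.
-
  move=> g1 IH1 g2 IH2 NA π Π r c m0 d Hπ HΠ Hr Hc Hrel m Hm /=.
  have NA1 : forall o, p o \notin patoms g1.
    by move=> o; move: (NA o); rewrite /= mem_cat negb_or => /andP [].
  have NA2 : forall o, p o \notin patoms g2.
    by move=> o; move: (NA o); rewrite /= mem_cat negb_or => /andP [].
  have I1 := IH1 NA1 π Π r c m0 d Hπ HΠ Hr Hc Hrel.
  have I2 := IH2 NA2 π Π r c m0 d Hπ HΠ Hr Hc Hrel.
  split.
  + move=> [m' [Hm' [Hb Ha]]]; exists (m' + d); split; first by rewrite leq_add2r.
    split; first by apply/I2 => //; apply: leq_trans Hm'.
    move=> k Hk1 Hk2.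
    have -> : k = (k - d) + d by rewrite subnK //; apply: leq_trans Hk1; apply: leq_addl.
    apply/I1; first by lia.
    apply: Ha; lia.
  + move=> [m' [Hm' [Hb Ha]]]; exists (m' - d).
    have E : m' = (m' - d) + d by rewrite subnK //; apply: leq_trans Hm'; apply: leq_addl.
    split; first by lia.
    split; first by apply/I2; [lia|rewrite -E].
    move=> k Hk1 Hk2; apply/I1; first by lia.
    apply: Ha; lia.
Qed.

End Main.

Unset Implicit Arguments.

Theorem mainTheorem12 (Obs : finType) (M : model Obs) (p : Obs -> nat)
    (Phi : hform Obs) :
  wf_model M ->
  injective p ->
  (forall o, p o \notin APf M) ->
  (forall o, p o \notin hatoms Phi) ->
  (msat M Phi <-> msat (Mprime p M) (tr p (o0 M) Phi)).
Proof.
move=> Hwf Hinj HAP NA.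
exact: ((main_both Hwf Hinj HAP).1 Phi NA [:: s0 M] [::] (erefl true) (erefl true)).
Qed.
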